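(* Let $m\ge 2$, $\alpha\in[0,1]$, $\pi$ a permutation of $E_{m-1}=\{1,\dots,m-1\}$, $V_\alpha$ as defined below, and for $\mathbf{x}^{(0)}\in S^{m-1}$ let $\mathbf{x}^{(n+1)}=V_\alpha(\mathbf{x}^{(n)})$ and let $\omega(\mathbf{x}^{(0)})$ be the set of limit points of $(\mathbf{x}^{(n)})_{n\ge0}$. Let $\Gamma=\{\mathbf{x}\in S^{m-1}: x_m=0\}\cup\{\mathbf{e}_m\}$, $\mathbf{e}_m=(0,\dots,0,1)$. Then: (i) if $\mathbf{x}^{(0)}\in\Gamma$, then $\omega(\mathbf{x}^{(0)})=\{\mathbf{e}_m\}$; (ii) if $\alpha\in(0,1)$ and $\pi\ne\mathrm{Id}$, then for every $\mathbf{x}^{(0)}\in S^{m-1}\setminus(\Gamma\cup X)$ the trajectory converges: $\omega(\mathbf{x}^{(0)})=\{\mathbf{b}\}$ for some point $\mathbf{b}\in X$, where $X=\{\mathbf{x}\in S^{m-1}: x_k=x_l \text{ for all } k,l\in\mathrm{supp}(\tau_i),\ i=1,\dots,q,\ x_m=1/2\}$.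
   Context: $S^{m-1}=\{\mathbf{x}=(x_1,\dots,x_m)\in\mathbb{R}^m: x_i\ge 0,\ \sum_{i=1}^m x_i=1\}$. For a permutation $\pi$ of $E_{m-1}$, $\pi=\tau_1\cdots\tau_q$ is its decomposition into disjoint cycles of length $\ge 2$, and $\mathrm{supp}(\tau_i)$ is the set of elements moved by $\tau_i$. For $\alpha\in[0,1]$ the operator $V_\alpha\colon S^{m-1}\to S^{m-1}$ is $\mathbf{x}\mapsto\mathbf{x}'$ with $x'_k=2x_m(\alpha x_k+(1-\alpha)x_{\pi(k)})$ for $k=1,\dots,m-1$ and $x'_m=x_m^2+\big(\sum_{i=1}^{m-1}x_i\big)^2$. *)

(* Defs.v *)
(* Convention: m = n.+1 with n >= 1 (so m >= 2).
   Points of R^m are functions 'I_n.+1 -> R; coordinate k (1 <= k <= m-1)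
   of the paper is index k-1 : 'I_n.+1 (= lift ord_max of k-1 : 'I_n), and
   coordinate m is ord_max.  E_{m-1} is 'I_n. *)
From mathcomp Require Import all_boot all_order all_algebra all_fingroup.
From mathcomp Require Import reals.
Set Implicit Arguments.
Unset Strict Implicit.
Unset Printing Implicit Defensive.
Import Order.TTheory GRing.Theory Num.Theory.
Local Open Scope ring_scope.

Section Defs.
Variables (R : realType) (n : nat).

Definition point := 'I_n.+1 -> R.

Definition in_simplex (x : point) : Prop :=
  (forall i, 0 <= x i) /\ \sum_(i < n.+1) x i = 1.

Definition Valpha (alpha : R) (pi : {perm 'I_n}) (x : point) : point :=
  fun i => match unlift ord_max i with
           | Some k => 2 * x ord_max *
                       (alpha * x (lift ord_max k) + (1 - alpha) * x (lift ord_max (pi k)))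
           | None => x ord_max ^+ 2 + (\sum_(k < n) x (lift ord_max k)) ^+ 2
           end.

Definition traj (alpha : R) (pi : {perm 'I_n}) (x0 : point) (k : nat) : point :=
  iter k (Valpha alpha pi) x0.

(* b is a limit point of the sequence u in R^m (sup-norm neighbourhoods);
   omega(x0) = { b | is_limit_point (traj alpha pi x0) b } *)
Definition is_limit_point (u : nat -> point) (b : point) : Prop :=
  forall eps : R, 0 < eps -> forall N : nat, exists k : nat,
    (N <= k)%N /\ forall i, `|u k i - b i| < eps.

Definition e_m : point := fun i => if i == ord_max then 1 else 0.

Definition in_Gamma (x : point) : Prop :=
  (in_simplex x /\ x ord_max = 0) \/ x = e_m.

(* X: x in the simplex, x_k = x_l whenever k, l lie in the support of the
   same (nontrivial) cycle of pi, and x_m = 1/2.  Two elements lie in the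
   same cycle iff l is in the pi-orbit (porbit) of k; for k = l in a trivial
   cycle the condition is vacuous. *)
Definition in_X (pi : {perm 'I_n}) (x : point) : Prop :=
  [/\ in_simplex x,
      (forall k l : 'I_n, l \in porbit pi k ->
          x (lift ord_max k) = x (lift ord_max l))
    & x ord_max = 1 / 2].

End Defs.

(* Main.v *)
Require Import Defs.
From mathcomp Require Import all_boot all_order all_algebra all_fingroup.
From mathcomp Require Import reals.
From mathcomp Require Import ring lra.
From Stdlib Require Import FunctionalExtensionality.
Import Order.TTheory GRing.Theory Num.Theory.
Local Open Scope ring_scope.
Set Implicit Arguments.
Unset Strict Implicit.

Section Helpers.
Variables (R : realType) (n : nat) (alpha : R) (pi : {perm 'I_n}).

Lemma sum_split (x : point R n) :
  \sum_(i < n.+1) x i = x ord_max + \sum_(k < n) x (lift ord_max k).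
Proof. by rewrite (bigD1_ord ord_max) //=. Qed.

Lemma V_max (x : point R n) :
  Valpha alpha pi x ord_max = x ord_max ^+ 2 + (\sum_(k < n) x (lift ord_max k)) ^+ 2.
Proof. by rewrite /Valpha unlift_none. Qed.

Lemma V_lift (x : point R n) k :
  Valpha alpha pi x (lift ord_max k) =
  2 * x ord_max * (alpha * x (lift ord_max k) + (1 - alpha) * x (lift ord_max (pi k))).
Proof. by rewrite /Valpha liftK. Qed.

Lemma trajS x0 N : traj alpha pi x0 N.+1 = Valpha alpha pi (traj alpha pi x0 N).
Proof. by []. Qed.

Lemma em_lift k : @e_m R n (lift ord_max k) = 0.
Proof. by rewrite /e_m eq_sym (negbTE (neq_lift _ _)). Qed.

End Helpers.
Section Conv.
Variables (R : realType) (n : nat).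

Lemma small0 (x : R) : (forall eps, 0 < eps -> `|x| < eps) -> x = 0.
Proof.
move=> H; apply/eqP; apply: contraT => /negPf hx.
have: `|x| < `|x| by apply: H; rewrite normr_gt0 hx.
by rewrite ltxx.
Qed.

Definition uconv (u : nat -> point R n) (b : point R n) :=
  forall eps : R, 0 < eps -> exists N : nat, forall k, (N <= k)%N ->
    forall i, `|u k i - b i| < eps.

Lemma uconv_lim u b : uconv u b -> forall c, is_limit_point u c <-> c = b.
Proof.
move=> H c; split.
- move=> L; apply: functional_extensionality => i; apply/eqP; rewrite -subr_eq0; apply/eqP.
  apply: small0 => eps he.
  have he2 : 0 < eps / 2 by rewrite divr_gt0.
  have [N HN] := H _ he2.
  have [k [Nk Hk]] := L _ he2 N.
  have h1 := HN k Nk i; have h2 := Hk i.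
  have -> : c i - b i = (u k i - b i) - (u k i - c i) by ring.
  apply: (le_lt_trans (ler_normB _ _)).
  have -> : eps = eps / 2 + eps / 2 by field.
  by apply: ltrD.
- move=> -> eps he N.
  have [N' HN] := H _ he.
  exists (maxn N N'); split; first by rewrite leq_maxl.
  by apply: HN; rewrite leq_maxr.
Qed.

Lemma uconv_ev u b N0 : (forall k, (N0 <= k)%N -> u k = b) -> uconv u b.
Proof.
move=> H eps he; exists N0 => k Hk i; by rewrite H // subrr normr0.
Qed.

Lemma unif_fin (T : finType) (P : T -> nat -> Prop) :
  (forall i, exists N, forall k, (N <= k)%N -> P i k) ->
  exists N, forall k, (N <= k)%N -> forall i, P i k.
Proof.
move=> H.
suff: forall s : seq T, exists N, forall k, (N <= k)%N -> forall i, i \in s -> P i k.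
  by case/(_ (enum T)) => N HN; exists N => k Hk i; apply: HN; rewrite ?mem_enum.
elim => [|a s [N HN]]; first by exists 0%N.
have [Na Ha] := H a.
exists (maxn N Na) => k Hk i; rewrite inE => /orP[/eqP->|his].
  by apply: Ha; apply: leq_trans Hk; rewrite leq_maxr.
by apply: HN => //; apply: leq_trans Hk; rewrite leq_maxl.
Qed.

End Conv.
Section PartI.
Variables (R : realType) (n : nat) (alpha : R) (pi : {perm 'I_n}).

Lemma em_max : @e_m R n ord_max = 1.
Proof. by rewrite /e_m eqxx. Qed.

Lemma V_em : Valpha alpha pi (@e_m R n) = @e_m R n.
Proof.
apply: functional_extensionality => i; case: (unliftP ord_max i) => [k ->|->].
  by rewrite V_lift !em_lift; ring.
rewrite V_max em_max big1 ?expr0n //=; first by rewrite expr1n addr0.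
by move=> k _; rewrite em_lift.
Qed.

Lemma V_zero (x : point R n) : in_simplex x -> x ord_max = 0 ->
  Valpha alpha pi x = @e_m R n.
Proof.
move=> [_ hs] h0; apply: functional_extensionality => i.
case: (unliftP ord_max i) => [k ->|->].
  by rewrite V_lift em_lift h0; ring.
rewrite V_max em_max; move: hs; rewrite sum_split h0 add0r => ->.
by rewrite expr0n expr1n add0r.
Qed.

Lemma partI (x0 : point R n) : in_Gamma x0 ->
  forall b, is_limit_point (traj alpha pi x0) b <-> b = @e_m R n.
Proof.
move=> hG; apply: uconv_lim; apply: (@uconv_ev _ _ _ _ 1%N).
have Hem : forall k, traj alpha pi (@e_m R n) k = @e_m R n.
  by elim=> [//|k IH]; rewrite trajS IH V_em.
case: hG => [[hs h0]|->]; last by move=> k _; apply: Hem.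
case=> [//|k] _.
have -> : traj alpha pi x0 k.+1 = traj alpha pi (Valpha alpha pi x0) k.
  by rewrite /traj iterSr.
by rewrite V_zero // Hem.
Qed.

End PartI.
Section Lin.
Variables (R : realType) (n : nat) (alpha : R) (pi : {perm 'I_n}).
Hypotheses (ha0 : 0 <= alpha) (ha1 : alpha <= 1).

Definition Mop (f : 'I_n -> R) : 'I_n -> R :=
  fun k => alpha * f k + (1 - alpha) * f (pi k).
Definition En (f : 'I_n -> R) : R := \sum_i f i ^+ 2.
Definition Dif (f : 'I_n -> R) : 'I_n -> R := fun i => f i - f (pi i).

Lemma reidx (F : 'I_n -> R) : \sum_i F (pi i) = \sum_i F i.
Proof. by rewrite [RHS](reindex_inj (@perm_inj _ pi)). Qed.

Lemma porbit_pi a i : (pi i \in porbit pi a) = (i \in porbit pi a).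
Proof.
rewrite porbit_sym -[pi i]/((pi ^+ 1)%g i) ?expg1 //.
have -> : pi i = (pi ^+ 1)%g i by rewrite expg1.
by rewrite porbit_perm porbit_sym.
Qed.

Lemma reidx_orb a (F : 'I_n -> R) :
  \sum_(i in porbit pi a) F (pi i) = \sum_(i in porbit pi a) F i.
Proof.
rewrite [RHS](reindex_inj (@perm_inj _ pi)) /=.
by apply: eq_bigl => i; rewrite porbit_pi.
Qed.

Lemma sum_Mop f : \sum_i Mop f i = \sum_i f i.
Proof.
rewrite /Mop big_split /= -!mulr_sumr reidx; ring.
Qed.

Lemma orb_Mop a f : \sum_(i in porbit pi a) Mop f i = \sum_(i in porbit pi a) f i.
Proof.
rewrite /Mop big_split /= -!mulr_sumr reidx_orb; ring.
Qed.

Lemma Mop_ge0 f : (forall i, 0 <= f i) -> forall i, 0 <= Mop f i.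
Proof.
move=> H i; rewrite /Mop; apply: addr_ge0; apply: mulr_ge0 => //.
by rewrite subr_ge0.
Qed.

Lemma En_ge0 f : 0 <= En f.
Proof. by apply: sumr_ge0 => i _; apply: sqr_ge0. Qed.

Lemma En_Mop f : En (Mop f) = En f - alpha * (1 - alpha) * En (Dif f).
Proof.
rewrite /En /Mop /Dif.
transitivity (\sum_i (alpha * f i ^+ 2 + (1 - alpha) * f (pi i) ^+ 2
                - alpha * (1 - alpha) * (f i - f (pi i)) ^+ 2)).
  by apply: eq_bigr => i _; ring.
rewrite sumrB big_split /= -!mulr_sumr.
rewrite (reidx (fun i => f i ^+ 2)); ring.
Qed.

Lemma Dif_Mop f : Dif (Mop f) = Mop (Dif f).
Proof. by apply: functional_extensionality => i; rewrite /Dif /Mop; ring. Qed.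

End Lin.
Section Zseq.
Variables (R : realType) (n : nat) (alpha : R) (pi : {perm 'I_n}).
Hypotheses (ha0 : 0 < alpha) (ha1 : alpha < 1).
Variable z0 : 'I_n -> R.

Definition zs N := iter N (Mop alpha pi) z0.
Let c := alpha * (1 - alpha).
Let D N := En (Dif pi (zs N)).
Let V N := En (zs N).

Lemma c_gt0 : 0 < c.
Proof. by rewrite /c mulr_gt0 // subr_gt0. Qed.

Lemma zsS N : zs N.+1 = Mop alpha pi (zs N).
Proof. by []. Qed.

Lemma D_dec N : D N.+1 <= D N.
Proof.
rewrite /D zsS Dif_Mop En_Mop -/c.
have := En_ge0 (Dif pi (Dif pi (zs N))); have := c_gt0; nra.
Qed.

Lemma V_step N : V N.+1 = V N - c * D N.
Proof. by rewrite /V /D zsS En_Mop. Qed.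

Lemma Qbound N : N%:R * c * D N + V N <= V 0.
Proof.
elim: N => [|N IH]; first by rewrite mul0r mul0r add0r.
rewrite V_step.
have := D_dec N; have := c_gt0; have := En_ge0 (Dif pi (zs N)).
rewrite -/(D N) -[_.+1]addn1 natrD /= => h1 h2 h3.
have h4 : 0 <= N%:R :> R by [].
have h5 : (N%:R + 1) * c * D (N + 1) <= (N%:R + 1) * c * D N.
  apply: ler_wpM2l => //; apply: mulr_ge0; [apply: addr_ge0 => // | apply: ltW => //].
lra.
Qed.

Lemma D_to0 (e : R) : 0 < e -> exists N, forall k, (N <= k)%N -> D k < e.
Proof.
move=> he.
have h0 : 0 <= V 0 / (c * e) by rewrite divr_ge0 ?En_ge0 // ltW // mulr_gt0 // c_gt0.
exists (Num.bound (V 0 / (c * e))) => k Hk.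
have hb := archi_boundP h0.
have hk : (Num.bound (V 0 / (c * e)))%:R <= k%:R :> R by rewrite ler_nat.
have hlt : V 0 < k%:R * (c * e).
  rewrite -ltr_pdivrMr; first lra.
  by rewrite mulr_gt0 // c_gt0.
have := Qbound k; have := En_ge0 (zs k); rewrite -/(V k) => hV hQ.
have hc := c_gt0.
have hD : 0 <= D k by apply: En_ge0.
have hk0 : 0 <= k%:R :> R by [].
rewrite ltNge; apply/negP => hDe.
have : k%:R * c * e <= k%:R * c * D k.
  by apply: ler_wpM2l => //; apply: mulr_ge0 => //; apply: ltW.
lra.
Qed.

Lemma Dif_to0 (e : R) : 0 < e -> exists N, forall k, (N <= k)%N ->
  forall i, `|Dif pi (zs k) i| < e.
Proof.
move=> he; have [N HN] := D_to0 (mulr_gt0 he he).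
exists N => k Hk i; have := HN k Hk.
have : Dif pi (zs k) i ^+ 2 <= D k.
  rewrite /D /En (bigD1 i) //= lerDl; apply: sumr_ge0 => j _; apply: sqr_ge0.
move=> h1 h2; rewrite ltr_norml; apply/andP; split; nra.
Qed.

Lemma orbdiff a (e : R) k : (forall i, `|Dif pi (zs k) i| < e) ->
  forall j, `|zs k a - zs k ((pi ^+ j)%g a)| <= j%:R * e.
Proof.
move=> H; elim => [|j IH]; first by rewrite expg0 perm1 subrr normr0 mul0r.
rewrite expgSr permM.
have -> : zs k a - zs k (pi ((pi ^+ j)%g a)) =
   (zs k a - zs k ((pi ^+ j)%g a)) + Dif pi (zs k) ((pi ^+ j)%g a)
   by rewrite /Dif; ring.
apply: (le_trans (ler_normD _ _)).
rewrite -[_.+1]addn1 natrD mulrDl mul1r.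
by apply: lerD => //; apply: ltW.
Qed.

Lemma conv_orb a l : l \in porbit pi a -> forall e : R, 0 < e ->
  exists N, forall k, (N <= k)%N -> `|zs k a - zs k l| < e.
Proof.
move=> /porbitP [j ->] e he.
have hj : 0 < (j.+1)%:R :> R by rewrite ltr0n.
have [N HN] := Dif_to0 (divr_gt0 he hj).
exists N => k Hk.
apply: (le_lt_trans (orbdiff a (HN k Hk) j)).
by rewrite mulrA ltr_pdivrMr // mulrC ltr_pM2l // ltr_nat.
Qed.

Definition Aavg a := (\sum_(l in porbit pi a) z0 l) / #|porbit pi a|%:R.

Lemma orb_inv a N : \sum_(l in porbit pi a) zs N l = \sum_(l in porbit pi a) z0 l.
Proof. by elim: N => [//|N IH]; rewrite zsS orb_Mop. Qed.

Lemma conv_avg a (e : R) : 0 < e -> exists N, forall k, (N <= k)%N -> `|zs k a - Aavg a| < e.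
Proof.
move=> he.
have he2 : 0 < e / 2 by rewrite divr_gt0.
have H : forall l, exists N, forall k, (N <= k)%N ->
    l \in porbit pi a -> `|zs k a - zs k l| < e / 2.
  move=> l; case: (boolP (l \in porbit pi a)) => hl.
    by have [N HN] := conv_orb hl he2; exists N => k hk _; apply: HN.
  by exists 0%N.
have [N HN] := unif_fin H.
exists N => k Hk.
have hO : 0 < #|porbit pi a|%:R :> R by rewrite ltr0n lt0n card_porbit_neq0.
have -> : zs k a - Aavg a =
   (\sum_(l in porbit pi a) (zs k a - zs k l)) / #|porbit pi a|%:R.
  rewrite sumrB sumr_const orb_inv /Aavg -mulr_natr; field.
  by rewrite lt0r_neq0.
rewrite normrM (@ger0_norm _ (#|porbit pi a|%:R^-1)); last by rewrite invr_ge0 ltW.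
rewrite ltr_pdivrMr //.
apply: (le_lt_trans (ler_norm_sum _ _ _)).
apply: (@le_lt_trans _ _ (\sum_(l in porbit pi a) (e / 2))).
  by apply: ler_sum => l hl; apply: ltW; apply: HN.
rewrite sumr_const -[_ *+ #|_|]mulr_natr ltr_pM2r //.
lra.
Qed.

End Zseq.
Section Geo.
Variable R : realType.

Lemma geo_bound (q : R) : 0 <= q -> q < 1 -> forall N : nat,
  q ^+ N * (N%:R * (1 - q)) <= 1.
Proof.
move=> h0 h1; elim => [|N IH]; first by rewrite mul0r mulr0 ler01.
have hq : q ^+ N <= 1 by apply: exprn_ile1 => //; apply: ltW.
have hq0 : 0 <= q ^+ N by apply: exprn_ge0.
rewrite exprS -[_.+1]addn1 natrD.
have e : q * q ^+ N * ((N%:R + 1%:R) * (1 - q)) =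
   q * (q ^+ N * (N%:R * (1 - q))) + q * (q ^+ N * (1 - q)) by ring.
rewrite e.
have a1 : q * (q ^+ N * (N%:R * (1 - q))) <= q by rewrite ler_piMr.
have a2 : q * (q ^+ N * (1 - q)) <= q * (1 - q).
  apply: ler_wpM2l => //; rewrite -[X in _ <= X]mul1r; apply: ler_wpM2r => //.
  by rewrite subr_ge0 ltW.
nra.
Qed.

Lemma geo_to0 (q : R) : 0 <= q -> q < 1 -> forall e : R, 0 < e ->
  exists N, forall k, (N <= k)%N -> q ^+ k < e.
Proof.
move=> h0 h1 e he.
have hq : 0 < 1 - q by rewrite subr_gt0.
have hb : 0 <= 1 / ((1 - q) * e) by rewrite divr_ge0 // ltW // mulr_gt0.
exists (Num.bound (1 / ((1 - q) * e))) => k Hk.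
have := archi_boundP hb.
have hk : (Num.bound (1 / ((1 - q) * e)))%:R <= k%:R :> R by rewrite ler_nat.
move=> hb2.
have hlt : 1 < k%:R * ((1 - q) * e).
  rewrite -ltr_pdivrMr; first lra.
  by rewrite mulr_gt0.
have := geo_bound h0 h1 k.
have hk0 : 0 <= q ^+ k by apply: exprn_ge0.
rewrite ltNge; move=> hg; apply/negP => he'.
have : e * (k%:R * (1 - q)) <= q ^+ k * (k%:R * (1 - q)).
  by apply: ler_wpM2r => //; apply: mulr_ge0 => //; apply: ltW.
lra.
Qed.

End Geo.
Section Traj.
Variables (R : realType) (n : nat) (alpha : R) (pi : {perm 'I_n}).
Hypotheses (ha0 : 0 < alpha) (ha1 : alpha < 1).
Variable x0 : point R n.
Hypotheses (hs : in_simplex x0) (ht0 : 0 < x0 ord_max) (ht1 : x0 ord_max < 1).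

Let z0 := fun k => x0 (lift ord_max k).
Let zz := zs alpha pi z0.
Let s0 := 1 - x0 ord_max.
Let t N := traj alpha pi x0 N ord_max.

Lemma s0_gt0 : 0 < s0.
Proof. by rewrite /s0 subr_gt0. Qed.

Lemma sum_zs N : \sum_i zz N i = s0.
Proof.
elim: N => [|N IH].
  by case: hs => _; rewrite sum_split /s0 /zz /zs /= => <-; ring.
by rewrite /zz zsS sum_Mop.
Qed.

Lemma zs_ge0 N i : 0 <= zz N i.
Proof.
elim: N i => [|N IH] i; first by case: hs => h _; apply: h.
by rewrite /zz zsS; apply: Mop_ge0 => //; apply: ltW.
Qed.

Lemma zs_le N i : zz N i <= s0.
Proof.
rewrite -(sum_zs N) (bigD1 i) //= lerDl; apply: sumr_ge0 => j _; apply: zs_ge0.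
Qed.

Lemma key N : forall k, traj alpha pi x0 N (lift ord_max k) = (1 - t N) / s0 * zz N k.
Proof.
have hs0 := s0_gt0.
elim: N => [|N IH] k.
  rewrite /t /zz /zs /= -/s0 /z0; field; by rewrite lt0r_neq0.
have ht : t N.+1 = t N ^+ 2 + (1 - t N) ^+ 2.
  rewrite /t trajS V_max -/(t N).
  under eq_bigr do rewrite IH.
  rewrite -mulr_sumr sum_zs; congr (_ + _); congr (_ ^+ 2); field; by rewrite lt0r_neq0.
rewrite ht trajS V_lift -/(t N) !IH /zz zsS /Mop; field; by rewrite lt0r_neq0.
Qed.

Lemma t_rec N : t N.+1 - 1 / 2 = 2 * (t N - 1 / 2) ^+ 2.
Proof.
have hs0 := s0_gt0.
rewrite /t trajS V_max -/(t N).
under eq_bigr do rewrite key.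
rewrite -mulr_sumr sum_zs.
have -> : (1 - t N) / s0 * s0 = 1 - t N by field; rewrite lt0r_neq0.
by field.
Qed.

Lemma sum_traj N : \sum_i traj alpha pi x0 N i = 1.
Proof.
have hs0 := s0_gt0.
rewrite sum_split; under eq_bigr do rewrite key.
rewrite -mulr_sumr sum_zs -/(t N); field; by rewrite lt0r_neq0.
Qed.

Lemma t0_bound : `|t 0 - 1 / 2| < 1 / 2.
Proof.
have -> : t 0 = x0 ord_max by [].
rewrite ltr_norml; apply/andP; split; have h0 : 0 < x0 ord_max := ht0; have h1 : x0 ord_max < 1 := ht1; clear ht0 ht1; lra.
Qed.

Lemma t_bound N : `|t N - 1 / 2| <= (2 * `|t 0 - 1 / 2|) ^+ N.
Proof.
set q := 2 * `|t 0 - 1 / 2|.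
have hq0 : 0 <= q by rewrite mulr_ge0.
have hu : `|t 0 - 1 / 2| < 1 / 2 by apply: t0_bound.
have hq1 : q <= 1 by rewrite /q; lra.
suff H : `|t N - 1 / 2| <= q / 2 * q ^+ N.
  apply: (le_trans H); rewrite -[X in _ <= X]mul1r; apply: ler_wpM2r; first exact: exprn_ge0.
  lra.
elim: N => [|N IH]; first by rewrite expr0 mulr1 /q; lra.
rewrite t_rec normrM normrX (@ger0_norm _ 2) // expr2 exprS.
have hn := normr_ge0 (t N - 1 / 2).
have hqN : q ^+ N <= 1 by apply: exprn_ile1.
have hqN0 : 0 <= q ^+ N by apply: exprn_ge0.
have h2 : `|t N - 1 / 2| <= q / 2 by apply: (le_trans IH); rewrite -[X in _ <= X]mulr1; apply: ler_wpM2l => //; lra.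
have h3 : `|t N - 1 / 2| * `|t N - 1 / 2| <= (q / 2) * (q / 2 * q ^+ N).
  by apply: ler_pM.
nra.
Qed.

Lemma t_conv (e : R) : 0 < e -> exists N, forall k, (N <= k)%N -> `|t k - 1 / 2| < e.
Proof.
move=> he.
have hq0 : 0 <= 2 * `|t 0 - 1 / 2| by rewrite mulr_ge0.
have hu : `|t 0 - 1 / 2| < 1 / 2 by apply: t0_bound.
have hq1 : 2 * `|t 0 - 1 / 2| < 1 by lra.
have [N HN] := geo_to0 hq0 hq1 he.
by exists N => k Hk; apply: le_lt_trans (t_bound k) (HN k Hk).
Qed.

Definition bpt : point R n := fun i =>
  match unlift ord_max i with
  | Some k => (1 / 2) / s0 * Aavg pi z0 k
  | None => 1 / 2
  end.

Lemma conv_b : uconv (traj alpha pi x0) bpt.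
Proof.
have hs0 := s0_gt0.
move=> e he; apply: unif_fin => i.
have he2 : 0 < e / 2 by rewrite divr_gt0.
case: (unliftP ord_max i) => [k ->|->]; last first.
  have [N HN] := t_conv he; exists N => m hm; rewrite /bpt unlift_none; exact: HN.
have [N1 HN1] := t_conv he2.
have hes : 0 < e * s0 by rewrite mulr_gt0.
have [N2 HN2] := conv_avg pi ha0 ha1 z0 k hes.
exists (maxn N1 N2) => m hm.
have hu := HN1 m (leq_trans (leq_maxl _ _) hm).
have hw := HN2 m (leq_trans (leq_maxr _ _) hm).
rewrite /bpt liftK key.
have hz0 := zs_ge0 m k; have hz1 := zs_le m k.
rewrite -/zz in hw hz0 hz1.
set u := t m - 1 / 2 in hu *.
set w := zz m k - Aavg pi z0 k in hw.
set r := zz m k / s0.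
have hr0 : 0 <= r by rewrite divr_ge0 // ltW.
have hr1 : r <= 1 by rewrite ler_pdivrMr // mul1r.
have -> : (1 - t m) / s0 * zz m k - 1 / 2 / s0 * Aavg pi z0 k = - (u * r) + w / (2 * s0).
  rewrite /u /w /r; field; by rewrite lt0r_neq0.
apply: (le_lt_trans (ler_normD _ _)).
rewrite normrN normrM (ger0_norm hr0) normrM (@ger0_norm _ (2 * s0)^-1); last first.
  by rewrite invr_ge0 mulr_ge0 // ltW.
have h1 : `|u| * r <= `|u| by rewrite ler_piMr.
have h2 : `|w| * (2 * s0)^-1 < e / 2.
  rewrite -(@ltr_pM2r _ (2 * s0)) ?mulr_gt0 // -mulrA mulVf ?mulr1; last first.
    by rewrite mulf_neq0 // lt0r_neq0.
  have -> : e / 2 * (2 * s0) = e * s0 by field.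
  exact: hw.
lra.
Qed.

Lemma inX_b : in_X pi bpt.
Proof.
have hs0 := s0_gt0.
have hz : forall l, 0 <= z0 l by case: hs => h _ l; apply: h.
have hA : forall k, 0 <= Aavg pi z0 k.
  move=> k; rewrite /Aavg divr_ge0 //; by apply: sumr_ge0 => l _; apply: hz.
split.
- split.
    move=> i; case: (unliftP ord_max i) => [k ->|->]; rewrite /bpt ?liftK ?unlift_none.
      apply: mulr_ge0; last exact: hA.
      by apply: divr_ge0; [rewrite divr_ge0 | exact: ltW].
    by rewrite divr_ge0.
  apply/eqP; rewrite -subr_eq0; apply/eqP; apply: small0 => e he.
  have hn : 0 < (n.+1)%:R :> R by rewrite ltr0n.
  have he' : 0 < e / 2 / (n.+1)%:R by rewrite !divr_gt0.
  have [N HN] := conv_b he'.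
  have -> : \sum_(i < n.+1) bpt i - 1 =
      - \sum_(i < n.+1) (traj alpha pi x0 N i - bpt i).
    by rewrite sumrB sum_traj; ring.
  rewrite normrN; apply: (le_lt_trans (ler_norm_sum _ _ _)).
  apply: (@le_lt_trans _ _ (\sum_(i < n.+1) (e / 2 / (n.+1)%:R))).
    by apply: ler_sum => i _; apply: ltW; apply: HN.
  rewrite sumr_const card_ord -[_ *+ n.+1]mulr_natr divfK; last by rewrite lt0r_neq0.
  have he0 : 0 < e := he. lra.
- move=> k l hl; rewrite /bpt !liftK /Aavg.
  have -> : porbit pi l = porbit pi k by apply/eqP; rewrite eq_porbit_mem.
  by [].
- by rewrite /bpt unlift_none.
Qed.

End Traj.

Unset Implicit Arguments.
Set Strict Implicit.

Theorem theorem2 (R : realType) (n : nat) (hn : (1 <= n)%N)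
    (alpha : R) (ha0 : 0 <= alpha) (ha1 : alpha <= 1) (pi : {perm 'I_n}) :
  (forall x0 : point R n, in_Gamma x0 ->
     forall b, is_limit_point (traj alpha pi x0) b <-> b = @e_m R n)
  /\
  (0 < alpha -> alpha < 1 -> pi != 1%g ->
     forall x0 : point R n, in_simplex x0 -> ~ in_Gamma x0 -> ~ in_X pi x0 ->
     exists b : point R n, in_X pi b /\
       forall c, is_limit_point (traj alpha pi x0) c <-> c = b).
Proof.
split; first by move=> x0 hG; apply: partI.
move=> hA0 hA1 _ x0 hs hG _.
have hs' := hs; case: hs' => hnn hsum.
have hm0 : 0 <= x0 ord_max := hnn ord_max.
have hS : 0 <= \sum_(k < n) x0 (lift ord_max k) by apply: sumr_ge0 => k _.
have hsp : x0 ord_max + \sum_(k < n) x0 (lift ord_max k) = 1 by rewrite -sum_split.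
have ht0 : 0 < x0 ord_max.
  rewrite lt_neqAle hm0 andbT; apply/negP => /eqP h.
  by apply: hG; left; split.
have ht1 : x0 ord_max < 1.
  rewrite lt_neqAle; apply/andP; split; last by lra.
  apply/negP => /eqP h1; apply: hG; right.
  have h0 : \sum_(k < n) x0 (lift ord_max k) = 0 by lra.
  have hz := psumr_eq0P (fun k _ => hnn (lift ord_max k)) h0.
  apply: functional_extensionality => i.
  case: (unliftP ord_max i) => [k ->|->]; last by rewrite em_max.
  by rewrite em_lift hz.
exists (bpt pi x0); split.
  exact: (@inX_b R n alpha pi hA0 hA1 x0 hs ht0 ht1).
apply: uconv_lim; exact: (@conv_b R n alpha pi hA0 hA1 x0 hs ht0 ht1).
Qed.
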